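(* Let $b,c>0$, let $x_1,x_2,\dots\in\mathbb{R}^d$ and $y_1,y_2,\dots\in\mathbb{R}$. For $t\ge1$ define \[ Q_t(u_1,\dots,u_t)=b\|u_1\|^2+c\sum_{s=1}^{t-1}\|u_{s+1}-u_s\|^2+\sum_{s=1}^t (y_s-u_s^\top x_s)^2 \] and $P_t(u_t)=\min_{u_1,\dots,u_{t-1}}Q_t(u_1,\dots,u_t)$ (with $P_1=Q_1$). Define $D_1=bI+x_1x_1^\top$, $e_1=y_1x_1$, $f_1=y_1^2$, and for $t\ge2$ \[ D_t=\big(D_{t-1}^{-1}+c^{-1}I\big)^{-1}+x_tx_t^\top,\quad e_t=\big(I+c^{-1}D_{t-1}\big)^{-1}e_{t-1}+y_tx_t,\quad f_t=f_{t-1}-e_{t-1}^\top\big(cI+D_{t-1}\big)^{-1}e_{t-1}+y_t^2 . \] Then for every $t\ge1$ the matrix $D_t\in\mathbb{R}^{d\times d}$ is positive definite and, for all $u_t\in\mathbb{R}^d$, \[ P_t(u_t)=u_t^\top D_tu_t-2u_t^\top e_t+f_t . \] *)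

(* Defs.v *)
From HB Require Import structures.
From mathcomp Require Import all_boot all_order all_algebra.
From mathcomp Require Import reals.
Set Implicit Arguments. Unset Strict Implicit. Unset Printing Implicit Defensive.
Import Order.TTheory GRing.Theory Num.Theory.
Local Open Scope ring_scope.

Section Defs.
Variables (R : realType) (d : nat) (b c : R)
  (x : nat -> 'cV[R]_d) (y : nat -> R).

Definition dotp (u w : 'cV[R]_d) : R := (u^T *m w) ord0 ord0.
Definition sqnorm (u : 'cV[R]_d) : R := dotp u u.

(* Q_t(u_1,...,u_t); u is a sequence indexed from 1, only u_1..u_t matter *)
Definition Q (t : nat) (u : nat -> 'cV[R]_d) : R :=
  b * sqnorm (u 1%N)
  + c * (\sum_(1 <= s < t) sqnorm (u s.+1 - u s))
  + \sum_(1 <= s < t.+1) (y s - dotp (u s) (x s)) ^+ 2.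

(* p is the minimum of Q_t(u_1,...,u_{t-1}, v) over u_1,...,u_{t-1},
   i.e. p = P_t(v) (the minimum is attained) *)
Definition is_P (t : nat) (v : 'cV[R]_d) (p : R) : Prop :=
  (exists u : nat -> 'cV[R]_d, u t = v /\ Q t u = p) /\
  (forall u : nat -> 'cV[R]_d, u t = v -> p <= Q t u).

Fixpoint Dm (t : nat) : 'M[R]_d :=
  match t with
  | 0 => 0
  | 1 => b%:M + x 1%N *m (x 1%N)^T
  | t'.+1 => invmx (invmx (Dm t') + c^-1%:M) + x t *m (x t)^T
  end.

Fixpoint em (t : nat) : 'cV[R]_d :=
  match t with
  | 0 => 0
  | 1 => y 1%N *: x 1%N
  | t'.+1 => invmx (1%:M + c^-1 *: Dm t') *m em t' + y t *: x t
  end.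

Fixpoint fm (t : nat) : R :=
  match t with
  | 0 => 0
  | 1 => y 1%N ^+ 2
  | t'.+1 => fm t' - ((em t')^T *m invmx (c%:M + Dm t') *m em t') ord0 ord0
             + y t ^+ 2
  end.

End Defs.

Definition posdef (R : realType) (d : nat) (D : 'M[R]_d) : Prop :=
  D^T = D /\ forall v : 'cV[R]_d, v != 0 -> 0 < (v^T *m D *m v) ord0 ord0.

(* Main.v *)
Require Import Defs.
From HB Require Import structures.
From mathcomp Require Import all_boot all_order all_algebra.
From mathcomp Require Import reals.
From mathcomp Require Import ring lra.
Import Order.TTheory GRing.Theory Num.Theory.
Local Open Scope ring_scope.

Section Dot.
Context {R : realType} {d : nat}.
Implicit Types (u v w : 'cV[R]_d) (A : 'M[R]_d).

Lemma dotpDl u1 u2 w : dotp (u1 + u2) w = dotp u1 w + dotp u2 w.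
Proof. by rewrite /dotp linearD /= mulmxDl mxE. Qed.
Lemma dotpDr u w1 w2 : dotp u (w1 + w2) = dotp u w1 + dotp u w2.
Proof. by rewrite /dotp mulmxDr mxE. Qed.
Lemma dotpZl a u w : dotp (a *: u) w = a * dotp u w.
Proof. by rewrite /dotp linearZ /= -scalemxAl mxE. Qed.
Lemma dotpZr a u w : dotp u (a *: w) = a * dotp u w.
Proof. by rewrite /dotp -scalemxAr mxE. Qed.
Lemma dotpNl u w : dotp (- u) w = - dotp u w.
Proof. by rewrite -scaleN1r dotpZl mulN1r. Qed.
Lemma dotpNr u w : dotp u (- w) = - dotp u w.
Proof. by rewrite -scaleN1r dotpZr mulN1r. Qed.
Lemma dotpBl u1 u2 w : dotp (u1 - u2) w = dotp u1 w - dotp u2 w.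
Proof. by rewrite dotpDl dotpNl. Qed.
Lemma dotpBr u w1 w2 : dotp u (w1 - w2) = dotp u w1 - dotp u w2.
Proof. by rewrite dotpDr dotpNr. Qed.
Lemma dotpC u w : dotp u w = dotp w u.
Proof. by rewrite /dotp -[u^T *m w]trmxK [(_)^T ord0 ord0]mxE trmx_mul trmxK. Qed.
Lemma dotpM u A w : dotp u (A *m w) = dotp (A^T *m u) w.
Proof. by rewrite /dotp trmx_mul trmxK mulmxA. Qed.
Lemma dotpMsym u A w : A^T = A -> dotp u (A *m w) = dotp w (A *m u).
Proof. by move=> HA; rewrite dotpM HA dotpC. Qed.
Lemma dotp_scal u a w : dotp u (a%:M *m w) = a * dotp u w.
Proof. by rewrite mul_scalar_mx dotpZr. Qed.
Lemma dotp1 u w : dotp u (1%:M *m w) = dotp u w.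
Proof. by rewrite mul1mx. Qed.
Lemma dotp0r u : dotp u 0 = 0.
Proof. by rewrite /dotp mulmx0 mxE. Qed.

Lemma msq_ge0 (a : R) : 0 <= a * a.
Proof. by rewrite -expr2 sqr_ge0. Qed.

Lemma dotpE u w : dotp u w = \sum_i u i ord0 * w i ord0.
Proof. by rewrite /dotp mxE; apply: eq_bigr => i _; rewrite mxE. Qed.

Lemma dotp_ge0 u : 0 <= dotp u u.
Proof. rewrite dotpE; apply: sumr_ge0 => i _; exact: msq_ge0. Qed.

Lemma dotp_gt0 u : u != 0 -> 0 < dotp u u.
Proof.
move=> Hu; rewrite lt_def dotp_ge0 andbT; apply/negP => /eqP H0.
move: Hu; rewrite -[u == 0]/(u == 0) ; apply/negP; rewrite negbK.
apply/eqP/matrixP => i j; rewrite (ord1 j) mxE.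
move: H0; rewrite dotpE => H0.
have := psumr_eq0P (P := predT) (fun k _ => msq_ge0 (u k ord0)) H0 (i := i) isT.
by move/eqP; rewrite mulf_eq0 orbb => /eqP.
Qed.

End Dot.

Section Unit.
Context {R : realType} {d : nat}.
Lemma pd_unit (A : 'M[R]_d) : A^T = A ->
  (forall v : 'cV[R]_d, v != 0 -> 0 < dotp v (A *m v)) -> A \in unitmx.
Proof.
move=> Asym Apos; rewrite -row_free_unit -kermx_eq0; apply/eqP/row_matrixP => i.
rewrite row0; set r := row i (kermx A).
have rA : r *m A = 0 by apply/sub_kermxP; exact: row_sub.
apply/eqP; apply/negPn/negP => rn0.
have vn0 : r^T != 0 by apply: contra rn0 => /eqP h; apply/eqP/trmx_inj; rewrite h trmx0.
have := Apos _ vn0.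
have -> : A *m r^T = 0 by rewrite -{1}Asym -trmx_mul rA trmx0.
by rewrite dotp0r ltxx.
Qed.

Lemma dotp_outer (v a w : 'cV[R]_d) : dotp v ((a *m a^T) *m w) = dotp v a * dotp a w.
Proof.
rewrite /dotp !mulmxA -[v^T *m a *m a^T *m w]mulmxA [LHS]mxE big_ord1.
by rewrite (ord1 (_ : 'I_1)) //.
Qed.
End Unit.

Section Step.
Context {R : realType} {d : nat}.
Variables (c : R) (D : 'M[R]_d) (e : 'cV[R]_d) (f : R).
Hypotheses (c0 : 0 < c) (Dsym : D^T = D)
  (Dpos : forall v : 'cV[R]_d, v != 0 -> 0 < dotp v (D *m v)).

Definition Mm := c%:M + D.
Definition Nm := invmx Mm.

Lemma Msym : Mm^T = Mm.
Proof. by rewrite /Mm linearD /= tr_scalar_mx Dsym. Qed.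

Lemma MmE (w : 'cV[R]_d) : Mm *m w = c *: w + D *m w.
Proof. by rewrite /Mm mulmxDl mul_scalar_mx. Qed.

Lemma Mpos (w : 'cV[R]_d) : w != 0 -> 0 < dotp w (Mm *m w).
Proof.
move=> wn0; rewrite MmE dotpDr dotpZr.
have := Dpos _ wn0; have := dotp_gt0 _ wn0; move=> h1 h2.
by rewrite addr_gt0 // mulr_gt0.
Qed.

Lemma Mnneg (w : 'cV[R]_d) : 0 <= dotp w (Mm *m w).
Proof.
have [->|wn0] := eqVneq w 0; first by rewrite mulmx0 dotp0r.
exact/ltW/Mpos.
Qed.

Lemma Munit : Mm \in unitmx.
Proof. exact: pd_unit Msym Mpos. Qed.
Lemma Dunit : D \in unitmx.
Proof. exact: pd_unit Dsym Dpos. Qed.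
Lemma Nsym : Nm^T = Nm.
Proof. by rewrite /Nm trmx_inv Msym. Qed.
Lemma MN : Mm *m Nm = 1%:M.
Proof. exact: mulmxV Munit. Qed.

Lemma cM : 1%:M + c^-1 *: D = c^-1 *: Mm.
Proof.
rewrite /Mm scalerDr scale_scalar_mx mulVf //; exact: lt0r_neq0.
Qed.

Lemma inv_of_mul (A B : 'M[R]_d) : A *m B = 1%:M -> invmx A = B.
Proof.
move=> h; have [Au _] := mulmx1_unit h.
by rewrite -(mulKmx Au B) h mulmx1.
Qed.

Lemma iden2 : invmx (1%:M + c^-1 *: D) = c *: Nm.
Proof.
apply: inv_of_mul; rewrite cM -scalemxAl -scalemxAr MN scalerA mulVf ?scale1r //.
exact: lt0r_neq0.
Qed.

Lemma iden1 : invmx (invmx D + c^-1%:M) = c%:M - c^+2 *: Nm.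
Proof.
apply: inv_of_mul.
set E := (_ *m _).
have h : D *m E = D.
  rewrite /E mulmxA [D *m (_ + _)]mulmxDr (mulmxV Dunit) mul_mx_scalar cM.
  rewrite -scalemxAl mulmxBr mul_mx_scalar -scalemxAr MN scalerBr scalerA.
  rewrite mulVf ?lt0r_neq0 // scale1r scalemx1 scale_scalar_mx.
  have -> : c^-1 * c ^+ 2 = c by rewrite expr2 mulKf ?lt0r_neq0.
  by rewrite /Mm addrC addKr.
by rewrite -(mulKmx Dunit E) h (mulVmx Dunit).
Qed.


Lemma complete_sq (v w : 'cV[R]_d) :
  dotp w (D *m w) - 2 * dotp w e + f + c * dotp (v - w) (v - w) =
  dotp (w - Nm *m (e + c *: v)) (Mm *m (w - Nm *m (e + c *: v))) +
  (dotp v ((c%:M - c^+2 *: Nm) *m v) - 2 * dotp v ((c *: Nm) *m e)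
    + (f - dotp e (Nm *m e))).
Proof.
set ws := Nm *m (e + c *: v).
have hMws : Mm *m ws = e + c *: v by rewrite /ws mulKVmx ?Munit.
have e1 : dotp (w - ws) (Mm *m (w - ws)) =
    dotp w (Mm *m w) - 2 * dotp w (Mm *m ws) + dotp ws (Mm *m ws).
  rewrite mulmxBr !dotpBl !dotpBr (dotpMsym ws Mm w Msym); ring.
have e2 : dotp ws (Mm *m ws) = dotp e (Nm *m e) + 2 * c * dotp v (Nm *m e)
    + c ^+ 2 * dotp v (Nm *m v).
  rewrite hMws dotpC /ws mulmxDr -scalemxAr !dotpDl !dotpDr !dotpZl !dotpZr.
  rewrite (dotpMsym e Nm v Nsym); ring.
have e3 : dotp w (Mm *m w) = c * dotp w w + dotp w (D *m w).
  by rewrite MmE dotpDr dotpZr.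
have e4 : dotp w (Mm *m ws) = dotp w e + c * dotp v w.
  by rewrite hMws dotpDr dotpZr (dotpC w v).
have e5 : dotp v ((c%:M - c^+2 *: Nm) *m v) = c * dotp v v - c ^+ 2 * dotp v (Nm *m v).
  by rewrite mulmxBl mul_scalar_mx -scalemxAl dotpBr !dotpZr.
have e6 : dotp v ((c *: Nm) *m e) = c * dotp v (Nm *m e).
  by rewrite -scalemxAl dotpZr.
have e7 : dotp (v - w) (v - w) = dotp v v - 2 * dotp v w + dotp w w.
  rewrite !dotpBl !dotpBr (dotpC w v); ring.
rewrite e1 e2 e3 e4 e5 e6 e7; ring.
Qed.

Lemma Dnew_pos (xx v : 'cV[R]_d) : v != 0 ->
  0 < dotp v (((c%:M - c^+2 *: Nm) + xx *m xx^T) *m v).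
Proof.
move=> vn0; rewrite mulmxDl dotpDr dotp_outer (dotpC xx v).
set w := Nm *m v.
have hv : v = Mm *m w by rewrite /w mulKVmx ?Munit.
have wn0 : w != 0 by apply: contra vn0 => /eqP w0; rewrite hv w0 mulmx0.
have hNv : Nm *m v = w by [].
have e5 : dotp v ((c%:M - c^+2 *: Nm) *m v) = c * dotp v v - c ^+ 2 * dotp v w.
  by rewrite mulmxBl mul_scalar_mx -scalemxAl dotpBr !dotpZr.
rewrite e5.
have hv' : v = c *: w + D *m w by rewrite {1}hv MmE.
have e8 : dotp v v = c ^+ 2 * dotp w w + 2 * c * dotp w (D *m w)
     + dotp (D *m w) (D *m w).
  rewrite hv' !dotpDl !dotpDr !dotpZl !dotpZr (dotpC (D *m w) w); ring.
have e9 : dotp v w = c * dotp w w + dotp w (D *m w).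
  rewrite hv' dotpDl dotpZl (dotpC (D *m w) w); ring.
rewrite e8 e9.
have h1 := Dpos _ wn0. have h2 := dotp_ge0 (D *m w).
have h3 := sqr_ge0 (dotp v xx).
have -> : c * (c ^+ 2 * dotp w w + 2 * c * dotp w (D *m w) + dotp (D *m w) (D *m w))
   - c ^+ 2 * (c * dotp w w + dotp w (D *m w)) =
   c ^+ 2 * dotp w (D *m w) + c * dotp (D *m w) (D *m w) by ring.
rewrite -expr2.
have p1 : 0 < c ^+ 2 * dotp w (D *m w) by rewrite mulr_gt0 // exprn_gt0.
have p2 : 0 <= c * dotp (D *m w) (D *m w) by rewrite mulr_ge0 // ltW.
lra.
Qed.

Lemma Dnew_sym (xx : 'cV[R]_d) :
  ((c%:M - c^+2 *: Nm) + xx *m xx^T)^T = (c%:M - c^+2 *: Nm) + xx *m xx^T.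
Proof.
by rewrite linearD linearB linearZ /= tr_scalar_mx Nsym trmx_mul trmxK.
Qed.

End Step.

Section QLem.
Context {R : realType} {d : nat}.
Variables (b c : R) (x : nat -> 'cV[R]_d) (y : nat -> R).

Lemma Q_ext t (u u' : nat -> 'cV[R]_d) : (1 <= t)%N ->
  (forall s, (s <= t)%N -> u s = u' s) -> Q b c x y t u = Q b c x y t u'.
Proof.
move=> t1 h; rewrite /Q h //; congr (_ + _ * _ + _).
  apply: eq_big_nat => i /andP[_ it]; rewrite !h //; exact: ltnW.
apply: eq_big_nat => i /andP[_ it]; rewrite h //.
Qed.

Lemma QS t (u : nat -> 'cV[R]_d) : (1 <= t)%N ->
  Q b c x y t.+1 u = Q b c x y t u + c * sqnorm (u t.+1 - u t)
    + (y t.+1 - dotp (u t.+1) (x t.+1)) ^+ 2.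
Proof.
move=> t1; rewrite /Q (big_nat_recr t) // (big_nat_recr t.+1) //.
rewrite /= mulrDr; ring.
Qed.

Lemma Q1 (u : nat -> 'cV[R]_d) :
  Q b c x y 1 u = b * sqnorm (u 1%N) + (y 1%N - dotp (u 1%N) (x 1%N)) ^+ 2.
Proof. by rewrite /Q big_geq // mulr0 addr0 big_nat1. Qed.
End QLem.

Lemma quadE {R : realType} {d : nat} (A : 'M[R]_d) (v : 'cV[R]_d) :
  ((v^T *m A) *m v) ord0 ord0 = dotp v (A *m v).
Proof. by rewrite /dotp mulmxA. Qed.

Theorem lemma2 (R : realType) (d : nat) (b c : R)
  (x : nat -> 'cV[R]_d) (y : nat -> R) :
  0 < b -> 0 < c ->
  forall t : nat, (1 <= t)%N ->
    posdef (Dm b c x t) /\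
    forall v : 'cV[R]_d,
      is_P b c x y t v
        (dotp v (Dm b c x t *m v) - 2 * dotp v (em b c x y t) + fm b c x y t).
Proof.
move=> b0 c0; elim => [//|n IH] Hn.
case: n IH Hn => [|n] IH _.
  have hD : Dm b c x 1 = b%:M + x 1%N *m (x 1%N)^T := erefl.
  have hval : forall v, dotp v (Dm b c x 1 *m v) - 2 * dotp v (em b c x y 1) + fm b c x y 1
      = b * sqnorm v + (y 1%N - dotp v (x 1%N)) ^+ 2.
    move=> v; rewrite hD /= mulmxDl dotpDr mul_scalar_mx dotpZr dotp_outer dotpZr.
    rewrite (dotpC (x 1%N) v) /sqnorm; ring.
  split.
    split; first by rewrite hD linearD /= tr_scalar_mx trmx_mul trmxK.
    move=> v vn0; rewrite quadE hD mulmxDl dotpDr mul_scalar_mx dotpZr dotp_outer.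
    rewrite (dotpC (x 1%N) v) -expr2; apply: ltr_wpDr; first exact: sqr_ge0.
    by rewrite mulr_gt0 // dotp_gt0.
  move=> v; rewrite hval; split.
    by exists (fun _ => v); split => //; rewrite Q1.
  by move=> u hu; rewrite Q1 hu.
have [[Dsym Dpos'] IHP] := IH isT.
set D := Dm b c x n.+1; set e := em b c x y n.+1; set f := fm b c x y n.+1.
have Dpos : forall v : 'cV[R]_d, v != 0 -> 0 < dotp v (D *m v).
  by move=> v vn0; have := Dpos' v vn0; rewrite quadE.
set N := Nm c D.
have hD : Dm b c x n.+2 = (c%:M - c^+2 *: N) + x n.+2 *m (x n.+2)^T.
  by rewrite -(iden1 c D c0 Dsym Dpos).
have he : em b c x y n.+2 = (c *: N) *m e + y n.+2 *: x n.+2.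
  by rewrite -(iden2 c D c0 Dsym Dpos).
have hf : fm b c x y n.+2 = f - dotp e (N *m e) + y n.+2 ^+ 2.
  by rewrite /= /dotp mulmxA.
split.
  rewrite hD; split; first exact: Dnew_sym c D Dsym _.
  by move=> v vn0; rewrite quadE; exact: (Dnew_pos c D c0 Dsym Dpos _ _ vn0).
move=> v.
set bracket := dotp v ((c%:M - c^+2 *: N) *m v) - 2 * dotp v ((c *: N) *m e)
    + (f - dotp e (N *m e)).
have htarget : dotp v (Dm b c x n.+2 *m v) - 2 * dotp v (em b c x y n.+2)
    + fm b c x y n.+2 = bracket + (y n.+2 - dotp v (x n.+2)) ^+ 2.
  rewrite hD he hf /bracket mulmxDl dotpDr dotp_outer dotpDr dotpZr (dotpC (x n.+2) v).
  ring.
have key : forall w, dotp w (D *m w) - 2 * dotp w e + f + c * sqnorm (v - w)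
    + (y n.+2 - dotp v (x n.+2)) ^+ 2 =
    dotp (w - N *m (e + c *: v)) (Mm c D *m (w - N *m (e + c *: v)))
    + (bracket + (y n.+2 - dotp v (x n.+2)) ^+ 2).
  by move=> w; rewrite /sqnorm (complete_sq c D e f c0 Dsym Dpos) -addrA.
suff HP : is_P b c x y n.+2 v (bracket + (y n.+2 - dotp v (x n.+2)) ^+ 2).
  by move: HP; rewrite -htarget.
split.
  set ws := N *m (e + c *: v).
  have [[u [hu1 hu2]] _] := IHP ws.
  exists (fun s => if s == n.+2 then v else u s); split; first by rewrite eqxx.
  rewrite QS // eqxx /= (_ : (n.+1 == n.+2) = false); last by rewrite eqSS; elim n.
  rewrite (@Q_ext _ _ b c x y n.+1 _ u) //; last first.
    by move=> s hs; case: eqP => // hs'; move: hs; rewrite hs' ltnn.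
  by rewrite hu2 hu1 key subrr mulmx0 dotp0r add0r.
move=> u hu.
rewrite QS // hu.
have := (IHP (u n.+1)).2 u erefl.
have := key (u n.+1).
have := Mnneg c D c0 Dpos (u n.+1 - N *m (e + c *: v)).
move=> h1 h2 h3.
have h4 : 0 <= c * sqnorm (v - u n.+1) by apply: mulr_ge0; [exact: ltW | exact: dotp_ge0].
rewrite -/D -/e -/f in h3. lra.
Qed.
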